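(* Suppose $\mathcal W$ is a locally minimal Banach space with a Schauder basis $(e_n)$. Then $\mathcal W$, with respect to the basis $(e_n)$, is $\omega^2$-minimal.
   Context: $\mathcal W$ is locally minimal if there is a constant $K\ge1$ such that for every finite-dimensional subspace $\mathcal F\subseteq\mathcal W$ and every infinite-dimensional subspace $\mathcal Y\subseteq\mathcal W$, $\mathcal F$ embeds into $\mathcal Y$ by an isomorphism $T$ with $\|T\|\|T^{-1}\|\le K$. For sequences $(x_i)_{i\le k},(y_i)_{i\le k}$ and $K\ge1$, $(x_i)\sim_K(y_i)$ means $\frac1K\|\sum_i a_ix_i\|\le\|\sum_i a_iy_i\|\le K\|\sum_i a_ix_i\|$ for all real $a_i$. For a basic sequence $(y_n)$ and a Banach space $\mathcal Y$, $T((y_n),\mathcal Y,K)$ is the tree of all finite sequences $(v_0,\dots,v_k)$ in $\mathcal Y$, including the empty one, with $(v_0,\dots,v_k)\sim_K(y_0,\dots,y_k)$. For a well-founded tree $T$, $\rho_T(s)=\sup\{\rho_T(t)+1:s\prec t\in T\}$ ($0$ at terminal nodes) and ${\rm rank}(T)=\sup\{\rho_T(s)+1:s\in T\}$; for ill-founded $T$, ${\rm rank}(T)=\infty>\alpha$ for all ordinals $\alpha$. ${\rm Emb}((y_n),\mathcal Y)=\sup_{K\ge1}{\rm rank}(T((y_n),\mathcal Y,K))$. A space $\mathcal W$ with Schauder basis $(e_n)$ is $\beta$-minimal if for every block basis $(z_n)$ of $(e_n)$ and every infinite-dimensional closed subspace $\mathcal Y\subseteq\mathcal W$, ${\rm Emb}((z_n),\mathcal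 Y)\ge\beta$. *)

(* Defs.v *)
From HB Require Import structures.
From mathcomp Require Import all_boot all_order all_algebra.
From mathcomp Require Import all_classical all_reals all_analysis.
Set Implicit Arguments. Unset Strict Implicit. Unset Printing Implicit Defensive.
Import Order.TTheory GRing.Theory Num.Theory.
Import numFieldNormedType.Exports.
Local Open Scope classical_set_scope.
Local Open Scope ring_scope.

Section BanachDefs.
Variables (R : realType) (V : normedModType R).

Definition schauder_basis (e : nat -> V) : Prop :=
  forall x : V,
    (exists a : nat -> R, series (fun i => a i *: e i) @ \oo --> x) /\
    (forall a b : nat -> R,
        series (fun i => a i *: e i) @ \oo --> x ->
        series (fun i => b i *: e i) @ \oo --> x -> a = b).

Definition lin_subspace (Y : set V) : Prop :=
  Y 0 /\ (forall x y, Y x -> Y y -> Y (x + y)) /\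
  (forall (c : R) x, Y x -> Y (c *: x)).

Definition infinite_dim (Y : set V) : Prop :=
  forall n : nat, exists f : 'I_n -> V,
    (forall i, Y (f i)) /\
    (forall c : 'I_n -> R, \sum_(i < n) c i *: f i = 0 -> forall i, c i = 0).

Definition inf_dim_closed_subspace (Y : set V) : Prop :=
  lin_subspace Y /\ closed Y /\ infinite_dim Y.

Definition finite_dim_subspace (F : set V) : Prop :=
  exists (n : nat) (f : 'I_n -> V),
    F = [set x | exists c : 'I_n -> R, x = \sum_(i < n) c i *: f i].

(** F embeds into Y by an isomorphism T with ||T|| ||T^-1|| <= K
    (||T|| <= a and ||T^-1|| <= b with a * b <= K). *)
Definition K_embeds (K : R) (F Y : set V) : Prop :=
  exists (T : V -> V) (a b : R),
    (forall x y, F x -> F y -> T (x + y) = T x + T y) /\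
    (forall (c : R) x, F x -> T (c *: x) = c *: T x) /\
    (forall x, F x -> Y (T x)) /\
    0 < a /\ 0 < b /\ a * b <= K /\
    (forall x, F x -> `|T x| <= a * `|x|) /\
    (forall x, F x -> `|x| <= b * `|T x|).

Definition locally_minimal : Prop :=
  exists K : R, 1 <= K /\
    forall F Y : set V, finite_dim_subspace F -> inf_dim_closed_subspace Y ->
      K_embeds K F Y.

Definition block_basis (e z : nat -> V) : Prop :=
  exists (p : nat -> nat) (a : nat -> R),
    (forall n, (p n < p n.+1)%N) /\
    (forall n, z n = \sum_(p n <= i < p n.+1) a i *: e i) /\
    (forall n, z n != 0).

(** (v_0,...,v_k) ~_K (y_0,...,y_k), for the finite sequence s = v and the
    initial segment of y of the same length. *)
Definition equivK (K : R) (s : seq V) (y : nat -> V) : Prop :=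
  forall c : nat -> R,
    K^-1 * `|\sum_(i < size s) c i *: s`_i| <= `|\sum_(i < size s) c i *: y i| /\
    `|\sum_(i < size s) c i *: y i| <= K * `|\sum_(i < size s) c i *: s`_i|.

Definition emb_tree (y : nat -> V) (Y : set V) (K : R) (s : seq V) : Prop :=
  (forall i, (i < size s)%N -> Y s`_i) /\ equivK K s y.

End BanachDefs.

(** Ordinals below omega^2: the pair (m, n) stands for omega*m + n. *)
Definition ord2 := (nat * nat)%type.
Definition ord2_lt (a b : ord2) : Prop :=
  (a.1 < b.1)%N \/ (a.1 = b.1 /\ (a.2 < b.2)%N).

(** rho_ge T s a  :<->  s \in T and rho_T(s) >= a, where
    rho_T(s) = sup { rho_T(t) + 1 : s strictly below t in T }.
    (rho_T(s) >= a iff for all b < a some strict extension t in T has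
    rho_T(t) >= b.)  For ill-founded trees the nodes on an infinite branch
    satisfy rho_ge for every a, matching rank = infinity. *)
Inductive rho_ge {V : Type} (T : seq V -> Prop) : seq V -> ord2 -> Prop :=
| RhoGe (s : seq V) (a : ord2) :
    T s ->
    (forall b, ord2_lt b a -> exists (x : V) (u : seq V), rho_ge T (s ++ x :: u) b) ->
    rho_ge T s a.

(** rank(T) > a  iff  some s in T has rho_T(s) + 1 > a, i.e. rho_T(s) >= a *)
Definition rank_gt {V : Type} (T : seq V -> Prop) (a : ord2) : Prop :=
  exists s, rho_ge T s a.

Section Minimality.
Variables (R : realType) (V : normedModType R).

Definition Emb_gt (y : nat -> V) (Y : set V) (a : ord2) : Prop :=
  exists K : R, 1 <= K /\ rank_gt (emb_tree y Y K) a.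

(** Emb((y_n), Y) >= omega^2  iff  Emb > a for every ordinal a < omega^2 *)
Definition Emb_ge_omega2 (y : nat -> V) (Y : set V) : Prop :=
  forall a : ord2, Emb_gt y Y a.

Definition omega2_minimal (e : nat -> V) : Prop :=
  forall z : nat -> V, block_basis e z ->
  forall Y : set V, inf_dim_closed_subspace Y -> Emb_ge_omega2 z Y.

End Minimality.

(* Main.v *)
Require Import Defs.
From HB Require Import structures.
From mathcomp Require Import all_boot all_order all_algebra.
From mathcomp Require Import all_classical all_reals all_analysis.
From mathcomp Require Import ring lra zify.
Set Implicit Arguments. Unset Strict Implicit. Unset Printing Implicit Defensive.
Import Order.TTheory GRing.Theory Num.Theory.
Import numFieldNormedType.Exports.
Local Open Scope classical_set_scope.
Local Open Scope ring_scope.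

Section Conv.
Variables (R : realType) (W : normedModType R).
Definition cvn (u : nat -> W) (x : W) :=
  forall eps : R, 0 < eps -> exists N, forall n, (N <= n)%N -> `|x - u n| <= eps.


Lemma convP (u : nat -> W) x : u @ \oo --> x <-> cvn u x.
Proof.
split.
- move/cvgrPdist_le => H eps e0; have := H eps e0.
  move=> [N _ HN]; exists N => n Nn; exact: HN.
- move=> H; apply/cvgrPdist_le => eps e0; have [N HN] := H eps e0.
  exists N => // n Nn; exact: HN.
Qed.

Lemma conv_uniq u x y : cvn u x -> cvn u y -> x = y.
Proof.
move=> hx hy; apply/eqP; rewrite -subr_eq0 -normr_le0.
apply/ler_addgt0Pr => eps e0; rewrite add0r.
have e20 : 0 < eps / 2 by rewrite divr_gt0.
have [N1 H1] := hx _ e20; have [N2 H2] := hy _ e20.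
have := H1 (maxn N1 N2) (leq_maxl _ _); have := H2 (maxn N1 N2) (leq_maxr _ _).
move=> a b; rewrite -(subrK (u (maxn N1 N2)) x) -addrA.
apply: (le_trans (ler_normD _ _)); rewrite (splitr eps) lerD //.
by rewrite -opprB normrN.
Qed.

Lemma convD u v x y : cvn u x -> cvn v y -> cvn (fun n => u n + v n) (x + y).
Proof.
move=> hx hy eps e0; have e20 : 0 < eps / 2 by rewrite divr_gt0.
have [N1 H1] := hx _ e20; have [N2 H2] := hy _ e20.
exists (maxn N1 N2) => n; rewrite geq_max => /andP[n1 n2].
rewrite opprD addrACA; apply: (le_trans (ler_normD _ _)).
by rewrite (splitr eps) lerD ?H1 ?H2.
Qed.

Lemma convZ u x (c : R) : cvn u x -> cvn (fun n => c *: u n) (c *: x).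
Proof.
move=> hx eps e0.
have e1 : 0 < eps / (`|c| + 1) by rewrite divr_gt0 // ltr_wpDl.
have [N H] := hx _ e1; exists N => n Nn.
rewrite -scalerBr normrZ; apply: (le_trans (ler_wpM2l (normr_ge0 _) (H n Nn))).
have hc : 0 < `|c| + 1 by rewrite ltr_wpDl.
apply: (@le_trans _ _ ((`|c| + 1) * (eps / (`|c| + 1)))).
  by rewrite ler_wpM2r ?lerDl // ltW.
by rewrite mulrC divfK ?gt_eqF.
Qed.

Lemma conv_cst_near u x N : (forall n, (N <= n)%N -> u n = x) -> cvn u x.
Proof. by move=> H eps e0; exists N => n Nn; rewrite H // subrr normr0 ltW. Qed.

Lemma conv_shift u x : cvn u x -> forall k, cvn (fun n => u (n + k)%N) x.
Proof.
move=> h k eps e0; have [N H] := h _ e0; exists N => n Nn; apply: H.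
exact: leq_trans Nn (leq_addr _ _).
Qed.

End Conv.

Section Complete.
Variables (R : realType) (W : completeNormedModType R).
Lemma cauchy_conv (u : nat -> W) :
  (forall eps : R, 0 < eps -> exists N, forall m n, (N <= m)%N -> (N <= n)%N ->
     `|u m - u n| <= eps) -> exists x, cvn u x.
Proof.
move=> H.
have : cvg (u @ \oo).
  apply: cauchy_cvg; apply: cauchy_exP => eps e0.
  have e20 : 0 < eps / 2 by rewrite divr_gt0.
  have [N HN] := H _ e20; exists (u N); exists N => // n Nn /=.
  rewrite -ball_normE /=; apply: (le_lt_trans (HN N n (leqnn _) Nn)).
  by rewrite ltr_pdivrMr // ltr_pMr // ltr1n.
by move=> /cvg_ex [x hx]; exists x; apply/convP.
Qed.
End Complete.

Section Basis.
Variables (R : realType) (W : completeNormedModType R) (e : nat -> W).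
Hypothesis hS : schauder_basis e.

Definition Sm (a : nat -> R) (n : nat) : W := \sum_(i < n) a i *: e i.

Lemma series_Sm a : series (fun i => a i *: e i) = Sm a.
Proof. by apply/funext => n; rewrite /series /= big_mkord. Qed.

Definition coef (x : W) : nat -> R := proj1_sig (cid (proj1 (hS x))).

Lemma coefP x : cvn (Sm (coef x)) x.
Proof.
rewrite /coef; case: (cid _) => a /= ha; apply/convP; by rewrite -series_Sm.
Qed.

Lemma coef_uniq a x : cvn (Sm a) x -> a = coef x.
Proof.
move=> h; apply: (proj2 (hS x)); first by rewrite series_Sm; apply/convP.
by rewrite series_Sm; apply/convP; exact: coefP.
Qed.

Definition P (N : nat) (x : W) : W := Sm (coef x) N.

Lemma PP x : cvn (fun N => P N x) x.
Proof. exact: coefP. Qed.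

Lemma coefD x y : coef (x + y) = fun i => coef x i + coef y i.
Proof.
apply/esym/coef_uniq.
have -> : Sm (fun i => coef x i + coef y i) = fun n => Sm (coef x) n + Sm (coef y) n.
  by apply/funext => n; rewrite /Sm -big_split /=; apply: eq_bigr => i _; rewrite scalerDl.
exact: convD (coefP x) (coefP y).
Qed.

Lemma coefZ (c : R) x : coef (c *: x) = fun i => c * coef x i.
Proof.
apply/esym/coef_uniq.
have -> : Sm (fun i => c * coef x i) = fun n => c *: Sm (coef x) n.
  by apply/funext => n; rewrite /Sm scaler_sumr; apply: eq_bigr => i _; rewrite scalerA.
exact: convZ (coefP x).
Qed.

Lemma coef0 : coef 0 = fun _ => 0.
Proof. by rewrite -(scale0r 0) coefZ; apply/funext => i; rewrite mul0r. Qed.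

Lemma coefN x : coef (- x) = fun i => - coef x i.
Proof. by rewrite -scaleN1r coefZ; apply/funext => i; rewrite mulN1r. Qed.

Lemma coefB x y : coef (x - y) = fun i => coef x i - coef y i.
Proof. by rewrite coefD coefN. Qed.

Lemma PD N x y : P N (x + y) = P N x + P N y.
Proof. by rewrite /P /Sm coefD -big_split; apply: eq_bigr => i _; rewrite scalerDl. Qed.

Lemma PZ N c x : P N (c *: x) = c *: P N x.
Proof. by rewrite /P /Sm coefZ scaler_sumr; apply: eq_bigr => i _; rewrite scalerA. Qed.

Lemma PN N x : P N (- x) = - P N x.
Proof. by rewrite -scaleN1r PZ scaleN1r. Qed.

Lemma PB N x y : P N (x - y) = P N x - P N y.
Proof. by rewrite PD PN. Qed.

Lemma P0x x : P 0 x = 0.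
Proof. by rewrite /P /Sm big_ord0. Qed.

Lemma PS N x : P N.+1 x = P N x + coef x N *: e N.
Proof. by rewrite /P /Sm big_ord_recr. Qed.

Lemma coef_fin (b : nat -> R) M : (forall i, (M <= i)%N -> b i = 0) ->
  coef (Sm b M) = b.
Proof.
move=> hb; apply/esym/coef_uniq; apply: (conv_cst_near (N := M)) => n Mn.
rewrite /Sm -(subnKC Mn) big_split_ord /= [X in _ + X]big1 ?addr0 // => i _.
by rewrite hb ?scale0r // leq_addr.
Qed.

Lemma e_neq0 i : e i != 0.
Proof.
apply/negP => /eqP ei0.
have h1 : cvn (Sm (fun k => if k == i then 1 else 0)) 0.
  apply: (conv_cst_near (N := 0)) => n _; rewrite /Sm big1 // => k _.
  by case: eqP => [->|]; rewrite ?ei0 ?scaler0 ?scale0r.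
have h2 : cvn (Sm (fun _ => 0)) 0.
  by apply: (conv_cst_near (N := 0)) => n _; rewrite /Sm big1 // => k _; rewrite scale0r.
have := coef_uniq h1; rewrite -(coef_uniq h2) => /(congr1 (fun f => f i)).
by rewrite eqxx => /eqP; rewrite oner_eq0.
Qed.

End Basis.

Section Closure.
Variables (R : realType) (W : normedModType R).
Lemma closureP (A : set W) x : closure A x ->
  forall eps : R, 0 < eps -> exists y, A y /\ `|x - y| < eps.
Proof.
move=> hc eps e0; have := hc (ball x eps) (nbhsx_ballx x eps e0).
by move=> [y [Ay bxy]]; exists y; split => //; move: bxy; rewrite -ball_normE.
Qed.

Lemma closedP (A : set W) :
  (forall x, (forall eps : R, 0 < eps -> exists y, A y /\ `|x - y| < eps) -> A x) ->
  closed A.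
Proof.
move=> H; rewrite closure_id; apply/seteqP; split; first exact: subset_closure.
by move=> x hx; apply: H; exact: closureP.
Qed.
End Closure.

Lemma zid (V : zmodType) (a b c d : V) : a + b - c - (a - d) = b - (c - d).
Proof. by rewrite !opprB addrC !addrA subrK [d + b]addrC. Qed.

Section Banach.
Variables (R : realType) (W : completeNormedModType R) (e : nat -> W).
Hypothesis hS : schauder_basis e.
Local Notation P := (P hS).
Local Notation coef := (coef hS).

Lemma P_bounded x : exists k : nat, forall N, `|P N x| <= k%:R.
Proof.
have [N0 HN0] := PP hS x ltr01.
pose B := `|x| + 1 + \sum_(n < N0) `|P n x|.
exists (Num.Def.trunc B).+1 => N; apply: (le_trans _ (ltW (truncnS_gt B))).
have hs : 0 <= \sum_(n < N0) `|P n x| by apply: sumr_ge0.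
case: (ltnP N N0) => hN.
- apply: (@le_trans _ _ (\sum_(n < N0) `|P n x|)).
    rewrite (bigD1 (Ordinal hN)) //= lerDl; exact: sumr_ge0.
  by rewrite /B lerDr addr_ge0.
- have h := HN0 N hN.
  apply: (@le_trans _ _ (`|x| + 1)); last by rewrite /B lerDl.
  have -> : P N x = x - (x - P N x) by rewrite opprB addrC subrK.
  by apply: (le_trans (ler_normB _ _)); rewrite lerD.
Qed.

Definition Ek (k : nat) : set W := [set x | forall N, `|P N x| <= k%:R].

Lemma Ek_ball : exists (k : nat) (x0 : W) (r : R), 0 < r /\ ball x0 r `<=` closure (Ek k).
Proof.
pose O := fun k => ~` closure (Ek k).
have : ~ forall k, open (O k) /\ dense (O k).
  move=> H; have := Baire H.
  move=> /(_ setT) []; first by exists 0.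
  - exact: openT.
  move=> x [_ hx]; have [k hk] := P_bounded x.
  by apply: (hx k Logic.I); apply: subset_closure.
move=> /existsNP [k /not_andP [|]].
  by move=> h; exfalso; apply: h; rewrite /O; apply: closed_openC; exact: closed_closure.
move=> /denseNE [U0 [[x /open_nbhs_nbhs /nbhs_ballP [r r0 bxr]] hO]].
exists k, x, r; split => //.
have : ball x r `&` O k = set0.
  by apply/seteqP; split => // y [/bxr U0y Oky]; rewrite -hO; split.
by move/disjoints_subset; rewrite /O setCK.
Qed.

Lemma basis_approx : exists M : R, 0 < M /\ forall x (eps : R), 0 < eps ->
  exists y, (forall N, `|P N y| <= M * `|x|) /\ `|x - y| <= eps.
Proof.
have [k [x0 [r [r0 hb]]]] := Ek_ball.
exists (4 * k.+1%:R / r); split; first by rewrite divr_gt0 // mulr_gt0.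
move=> x eps e0.
have [->|xn0] := eqVneq x 0.
  exists 0; split; last by rewrite subr0 normr0 ltW.
  move=> N; rewrite (_ : P N 0 = 0) ?normr0 ?mulr0 //.
  by rewrite -[0 in LHS](scale0r 0) PZ scale0r.
have nx0 : 0 < `|x| by rewrite normr_gt0.
pose t := r / (2 * `|x|).
have t0 : 0 < t by rewrite divr_gt0 // mulr_gt0.
have hx' : ball x0 r (x0 + t *: x).
  rewrite -ball_normE /= opprD addrA subrr sub0r normrN normrZ gtr0_norm //.
  have -> : t * `|x| = r / 2 by rewrite /t; field; rewrite gt_eqF.
  lra.
have ht : 0 < t * eps / 2 by rewrite divr_gt0 // mulr_gt0.
have [y1 [E1 h1]] := closureP (hb _ hx') ht.
have [y2 [E2 h2]] := closureP (hb _ (ballxx x0 r0)) ht.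
exists (t^-1 *: (y1 - y2)); split.
- move=> N; rewrite PZ PB normrZ gtr0_norm ?invr_gt0 //.
  set q := `|P N y1 - P N y2|.
  have hq : q <= k%:R + k%:R by apply: (le_trans (ler_normB _ _)); rewrite lerD.
  have hq0 : 0 <= q by exact: normr_ge0.
  have hk : k.+1%:R = k%:R + 1 :> R by rewrite -natr1.
  have hk0 : 0 <= k%:R :> R by exact: ler0n.
  have e1 : t^-1 * q = (2 * `|x| * q) / r.
    by rewrite /t; field; rewrite !gt_eqF.
  have e2 : 4 * k.+1%:R / r * `|x| = (4 * k.+1%:R * `|x|) / r by rewrite mulrAC.
  rewrite e1 e2 ler_pM2r ?invr_gt0 // hk; nra.
- have -> : x - t^-1 *: (y1 - y2) = t^-1 *: ((x0 + t *: x - y1) - (x0 - y2)).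
    rewrite zid [RHS]scalerBr scalerA mulVf ?gt_eqF // scale1r.
    by [].
  rewrite normrZ gtr0_norm ?invr_gt0 //.
  rewrite -ler_pdivlMl ?invr_gt0 // invrK.
  apply: (le_trans (ler_normB _ _)).
  have -> : t * eps = t * eps / 2 + t * eps / 2 by field.
  by rewrite lerD ?ltW.
Qed.

End Banach.

Lemma le_eps (R : realType) (a b : R) : (forall eta, 0 < eta -> a <= b + eta) -> a <= b.
Proof. by move=> h; apply/ler_addgt0Pr. Qed.

Lemma zid2 (V : zmodType) (a b c d : V) : a + c - (b + d) - (a - b) = c - d.
Proof. by rewrite opprD addrACA [X in X - _]addrC addrK. Qed.

Section Limit.
Variables (R : realType) (W : completeNormedModType R) (e : nat -> W).
Hypothesis hS : schauder_basis e.
Local Notation P := (P hS).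
Local Notation coef := (coef hS).

Lemma lim_le (v : nat -> W) l a b J0 :
  cvn v l -> (forall J, (J0 <= J)%N -> `|a - v J| <= b) -> `|a - l| <= b.
Proof.
move=> hv hb; apply: le_eps => eta eta0.
have [N HN] := hv _ eta0.
have := hb (maxn J0 N) (leq_maxl _ _); have := HN (maxn J0 N) (leq_maxr _ _).
move=> h1 h2; rewrite -(subrK (v (maxn J0 N)) a) -addrA.
apply: (le_trans (ler_normD _ _)); rewrite lerD //.
by rewrite -normrN opprB.
Qed.

Lemma limit_bound (u : nat -> W) x (B : R) (d : nat -> R) :
  cvn u x ->
  (forall J N, `|P N (u J)| <= B) ->
  (forall J J', (J <= J')%N -> forall N, `|P N (u J') - P N (u J)| <= d J) ->
  (forall eps, 0 < eps -> exists J0, forall J, (J0 <= J)%N -> d J <= eps) ->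
  forall N, `|P N x| <= B.
Proof.
move=> hux hB hd hd0.
have cauchyP : forall N, exists q, cvn (fun J => P N (u J)) q.
  move=> N; apply: cauchy_conv => eps e0; have [J0 H0] := hd0 _ e0.
  exists J0 => m n hm hn; case: (leqP n m) => hnm.
  - exact: le_trans (hd _ _ hnm N) (H0 _ hn).
  - by rewrite -normrN opprB; exact: le_trans (hd _ _ (ltnW hnm) N) (H0 _ hm).
have [q hq] := choice cauchyP.
have hqd : forall N J, `|P N (u J) - q N| <= d J.
  move=> N J; apply: (lim_le (J0 := J) (hq N)) => J' hJ'.
  by rewrite -normrN opprB; exact: hd.
have cauchyC : forall i, exists a : R, cvn (fun J => coef (u J) i) a.
  move=> i; apply: (@cauchy_conv R R) => eps e0.
  have en : 0 < `|e i| by rewrite normr_gt0 (e_neq0 hS).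
  have e1 : 0 < eps * `|e i| / 2 by rewrite divr_gt0 // mulr_gt0.
  have [J0 H0] := hd0 _ e1.
  have key : forall m n, (J0 <= n)%N -> (n <= m)%N ->
      `|coef (u m) i - coef (u n) i| <= eps.
    move=> m n hn hnm.
    have h := hd _ _ hnm i.+1; have h' := hd _ _ hnm i.
    rewrite !PS in h.
    have : `|(coef (u m) i - coef (u n) i) *: e i| <= eps * `|e i|.
      have -> : (coef (u m) i - coef (u n) i) *: e i =
         (P i (u m) + coef (u m) i *: e i - (P i (u n) + coef (u n) i *: e i))
         - (P i (u m) - P i (u n)).
        by rewrite zid2 scalerBl.
      apply: (le_trans (ler_normB _ _)).
      apply: (le_trans (lerD h h')).
      have := H0 n hn; lra.
    by rewrite normrZ ler_pM2r.
  exists J0 => m n hm hn; case: (leqP n m) => hnm; first exact: key.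
  by rewrite -normrN opprB; apply: key => //; exact: ltnW.
have [al hal] := choice cauchyC.
have hq0 : q 0 = 0.
  apply: (conv_uniq (hq 0)); apply: (conv_cst_near (N := 0)) => n _.
  exact: P0x.
have hqS : forall i, q i.+1 = q i + al i *: e i.
  move=> i; apply: (conv_uniq (hq i.+1)).
  have : cvn (fun J => P i (u J) + coef (u J) i *: e i) (q i + al i *: e i).
    apply: convD; first exact: hq.
    move=> eps e0.
    have en : 0 < `|e i| + 1 by rewrite ltr_wpDl.
    have [J0 H0] := hal i _ (divr_gt0 e0 en); exists J0 => J hJ.
    rewrite -scalerBl normrZ; have := H0 J hJ => h.
    apply: (le_trans (ler_wpM2r (normr_ge0 _) h)).
    rewrite -ler_pdivlMr ?normr_gt0 ?(e_neq0 hS) //.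
    rewrite ler_pM2l // lef_pV2 ?posrE ?normr_gt0 ?(e_neq0 hS) //.
    by rewrite lerDl.
  have -> : (fun J => P i.+1 (u J)) = (fun J => P i (u J) + coef (u J) i *: e i).
    by apply/funext => J; rewrite PS.
  by [].
have hqSm : forall N, q N = Sm e al N.
  elim=> [|N IH]; first by rewrite hq0 /Sm big_ord0.
  by rewrite hqS IH /Sm big_ord_recr.
have hx : cvn (Sm e al) x.
  move=> eps e0; have e3 : 0 < eps / 3 by rewrite divr_gt0.
  have [J1 H1] := hd0 _ e3; have [J2 H2] := hux _ e3.
  pose J := maxn J1 J2.
  have [N0 HN0] := PP hS (u J) e3.
  exists N0 => N hN; rewrite -hqSm.
  have -> : x - q N = (x - u J) + (u J - P N (u J)) + (P N (u J) - q N).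
    by rewrite !addrA subrK subrK.
  apply: (le_trans (ler_normD _ _)); rewrite -[eps](@divfK _ 3) // mulrC.
  rewrite (_ : 3 * (eps / 3) = eps / 3 + eps / 3 + eps / 3); last by field.
  rewrite lerD //; first (apply: (le_trans (ler_normD _ _)); rewrite lerD //).
  - exact: H2 (leq_maxr _ _).
  - exact: HN0.
  - exact: le_trans (hqd N J) (H1 _ (leq_maxl _ _)).
have hal' := coef_uniq hS hx.
move=> N; rewrite /P -hal' -hqSm -normrN -sub0r.
apply: (lim_le (a := 0) (J0 := 0) (hq N)) => J _.
by rewrite sub0r normrN.
Qed.
End Limit.

Section Geo.
Variable R : realType.
Definition g (j : nat) : R := (2^-1) ^+ j.
Lemma g_gt0 j : 0 < g j.
Proof. by rewrite /g exprn_gt0 // invr_gt0. Qed.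
Lemma gS j : g j.+1 = g j / 2.
Proof. by rewrite /g exprSr. Qed.
Lemma g0 : g 0 = 1. Proof. by rewrite /g expr0. Qed.
Lemma g_sum J k : \sum_(i < k) g (J + i) + 2 * g (J + k) = 2 * g J.
Proof.
elim: k => [|k IH]; first by rewrite big_ord0 add0r addn0.
rewrite big_ord_recr /= addnS gS -IH.
set a := g (J + k); set s := \sum_(i < k) _; lra.
Qed.
Lemma g_sum_le J k : \sum_(i < k) g (J + i) <= 2 * g J.
Proof. by rewrite -(g_sum J k) lerDl mulr_ge0 // ltW // g_gt0. Qed.
Lemma g_le j : g j <= (j.+1%:R)^-1.
Proof.
rewrite /g exprVn lef_pV2 ?posrE ?exprn_gt0 // -natrX ler_nat.
exact: ltn_expl.
Qed.
Lemma g_small (c : R) : 0 <= c -> forall eps, 0 < eps ->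
  exists J0, forall J, (J0 <= J)%N -> c * g J <= eps.
Proof.
move=> c0 eps e0; exists (Num.Def.trunc (c / eps)) => J hJ.
apply: (le_trans (ler_wpM2l c0 (g_le J))).
have hJ' : c / eps < J.+1%:R.
  by apply: (lt_le_trans (truncnS_gt _)); rewrite ler_nat ltnS.
rewrite ltr_pdivrMr // in hJ'.
by rewrite ler_pdivrMr // mulrC ltW.
Qed.
End Geo.

Lemma zid3 (V : zmodType) (x a b : V) : x - a + b = x - (a - b).
Proof. by rewrite opprB addrA addrAC. Qed.

Section BConst.
Variables (R : realType) (W : completeNormedModType R) (e : nat -> W).
Hypothesis hS : schauder_basis e.
Local Notation P := (P hS).
Local Notation coef := (coef hS).

Lemma P_0 N : P N 0 = 0.
Proof. by rewrite -[0 in LHS](scale0r 0) PZ scale0r. Qed.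

Lemma basis_const : exists C : R, 1 <= C /\ forall N x, `|P N x| <= C * `|x|.
Proof.
have [M [M0 hM]] := basis_approx hS.
have : forall p : W * R, exists y, 0 < p.2 ->
    (forall N, `|P N y| <= M * `|p.1|) /\ `|p.1 - y| <= p.2.
  move=> [x eps] /=; case: (ltrP 0 eps) => he.
  - by have [y hy] := hM x eps he; exists y.
  - by exists 0.
move=> /choice [ap hap].
exists (2 * M + 1); split; first by rewrite lerDr mulr_ge0 // ltW.
move=> N x.
apply: (@le_trans _ _ (2 * M * `|x|)); last by rewrite ler_wpM2r // lerDl.
have [->|xn0] := eqVneq x 0; first by rewrite P_0 normr0 mulr0.
have nx : 0 < `|x| by rewrite normr_gt0.
pose eps j := `|x| * g R j.+1.
have eps0 j : 0 < eps j by rewrite mulr_gt0 // g_gt0.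
pose fix xs j := if j is j'.+1 then xs j' - ap (xs j', eps j') else x.
pose ys j := ap (xs j, eps j).
have hys j : (forall N, `|P N (ys j)| <= M * `|xs j|) /\ `|xs j - ys j| <= eps j.
  exact: (hap (xs j, eps j) (eps0 j)).
have hxs j : `|xs j| <= `|x| * g R j.
  case: j => [|j]; first by rewrite g0 mulr1.
  exact: (proj2 (hys j)).
have hPy j N' : `|P N' (ys j)| <= M * `|x| * g R j.
  by rewrite -mulrA; apply: (le_trans (proj1 (hys j) N')); rewrite ler_wpM2l // ltW.
pose u J := \sum_(j < J) ys j.
have hu J : u J = x - xs J.
  elim: J => [|J IH]; first by rewrite /u big_ord0 subrr.
  by rewrite /u big_ord_recr /= -/(u J) IH zid3.
have Psum (J0 k N' : nat) : P N' (\sum_(j < k) ys (J0 + j)%N) = \sum_(j < k) P N' (ys (J0 + j)%N).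
  elim: k => [|k IH]; first by rewrite !big_ord0 P_0.
  by rewrite !big_ord_recr /= PD IH.
have normsum (J0 k N' : nat) : `|\sum_(j < k) P N' (ys (J0 + j)%N)| <= 2 * (M * `|x|) * g R J0.
  apply: (le_trans (ler_norm_sum _ _ _)).
  apply: (@le_trans _ _ (\sum_(j < k) M * `|x| * g R (J0 + j)%N)).
    by apply: ler_sum => j _; exact: hPy.
  rewrite -mulr_sumr.
  have -> : 2 * (M * `|x|) * g R J0 = M * `|x| * (2 * g R J0) by ring.
  apply: ler_wpM2l; [by rewrite mulr_ge0 // ltW | exact: g_sum_le].
apply: (limit_bound (u := u) (d := fun J => 2 * (M * `|x|) * g R J)).
- move=> eps' e0; have [J0 H0] := g_small (normr_ge0 x) e0.
  by exists J0 => J hJ; rewrite hu opprB addrC subrK; exact: le_trans (hxs J) (H0 J hJ).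
- move=> J N'; have := normsum 0%N J N'; rewrite -Psum g0 mulr1 mulrA.
  by [].
- move=> J J' hJJ' N'.
  have [k ->] : exists k, J' = (J + k)%N by exists (J' - J)%N; rewrite subnKC.
  rewrite -PB (_ : u (J + k)%N - u J = \sum_(j < k) ys (J + j)%N).
    by rewrite Psum; exact: normsum.
  rewrite /u big_split_ord /=.
  rewrite (_ : \sum_(i < J) ys (lshift k i) = \sum_(i < J) ys i) //.
  by rewrite addrAC subrr add0r.
- move=> eps' e0.
  have c0 : 0 <= 2 * (M * `|x|) by rewrite mulr_ge0 // mulr_ge0 // ltW.
  exact: g_small c0 _ e0.
Qed.
End BConst.

Section Blocks.
Variables (R : realType) (W : completeNormedModType R) (e : nat -> W).
Hypothesis hS : schauder_basis e.
Local Notation P := (P hS).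
Local Notation coef := (coef hS).

Lemma P_sum N L (F : nat -> W) : P N (\sum_(k < L) F k) = \sum_(k < L) P N (F k).
Proof.
elim: L => [|L IH]; first by rewrite !big_ord0 P_0.
by rewrite !big_ord_recr /= PD IH.
Qed.

Lemma P_block N a lo hi :
  P N (\sum_(lo <= i < hi) a i *: e i) =
  if (hi <= N)%N then \sum_(lo <= i < hi) a i *: e i
  else if (N <= lo)%N then 0 else P N (\sum_(lo <= i < hi) a i *: e i).
Proof.
pose b i := if (lo <= i < hi)%N then a i else 0.
have hQ : \sum_(lo <= i < hi) a i *: e i = Sm e b hi.
  rewrite big_geq_mkord /Sm big_mkcond /=; apply: eq_bigr => i _.
  by rewrite /b ltn_ord andbT; case: ifP => //; rewrite scale0r.
have hb : forall i, (hi <= i)%N -> b i = 0.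
  by move=> i hi_i; rewrite /b ltnNge hi_i andbF.
have hc := coef_fin hS hb.
case: ifP => hN.
- rewrite hQ /P hc /Sm -(subnKC hN) big_split_ord /=.
  by rewrite [X in _ + X]big1 ?addr0 // => i _; rewrite hb ?scale0r // leq_addr.
- case: ifP => // hl.
  rewrite hQ /P hc /Sm big1 // => i _; rewrite /b.
  by rewrite (leqNgt lo i) (leq_trans (ltn_ord i) hl) /= scale0r.
Qed.

Lemma P_block_in N a lo hi : (hi <= N)%N ->
  P N (\sum_(lo <= i < hi) a i *: e i) = \sum_(lo <= i < hi) a i *: e i.
Proof. by move=> h; rewrite P_block h. Qed.

Lemma P_block_out N a lo hi : (N <= lo)%N -> (lo <= hi)%N ->
  P N (\sum_(lo <= i < hi) a i *: e i) = 0.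
Proof.
move=> h hlh; rewrite P_block h; case: ifP => // hh.
have : (hi <= lo)%N := leq_trans hh h.
move=> hhl; have -> : hi = lo by apply/eqP; rewrite eqn_leq hhl hlh.
by rewrite big_geq.
Qed.

Variable C : R.
Hypothesis C1 : 1 <= C.
Hypothesis hC : forall N x, `|P N x| <= C * `|x|.

Lemma coef_bound x i : `|coef x i| * `|e i| <= 2 * C * `|x|.
Proof.
rewrite -normrZ.
have -> : coef x i *: e i = P i.+1 x - P i x by rewrite PS addrAC subrr add0r.
apply: (le_trans (ler_normB _ _)).
have h1 := hC i.+1 x; have h2 := hC i x; nra.
Qed.

Lemma P_lip N x y : `|P N x - P N y| <= C * `|x - y|.
Proof. by rewrite -PB. Qed.

Variables (z : nat -> W) (p : nat -> nat) (a : nat -> R).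
Hypothesis hp : forall n, (p n < p n.+1)%N.
Hypothesis hz : forall n, z n = \sum_(p n <= i < p n.+1) a i *: e i.

Lemma p_mono m n : (m <= n)%N -> (p m <= p n)%N.
Proof.
move=> /subnKC <-; elim: (n - m)%N => [|k IH]; first by rewrite addn0.
by rewrite addnS (leq_trans IH) // ltnW.
Qed.

Definition zsum (c : nat -> R) L := \sum_(k < L) c k *: z k.

Lemma P_zsum c j L : (j <= L)%N -> P (p j) (zsum c L) = zsum c j.
Proof.
move=> hjL; rewrite /zsum (P_sum _ _ (fun k => c k *: z k)).
have [k ->] : exists k, L = (j + k)%N by exists (L - j)%N; rewrite subnKC.
rewrite big_split_ord /= [X in _ + X]big1 ?addr0.
  apply: eq_bigr => i _; rewrite PZ hz P_block_in //; exact: p_mono.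
move=> i _; rewrite PZ hz P_block_out ?scaler0 //.
  by apply: p_mono; rewrite leq_addr.
exact: ltnW.
Qed.

Lemma zproj c j L : (j <= L)%N -> `|zsum c j| <= C * `|zsum c L|.
Proof. by move=> h; rewrite -(P_zsum c h). Qed.

Lemma zcoef c i L : (i < L)%N -> `|c i| * `|z i| <= 2 * C * `|zsum c L|.
Proof.
move=> hi; rewrite -normrZ.
have -> : c i *: z i = zsum c i.+1 - zsum c i by rewrite /zsum big_ord_recr /= addrAC subrr add0r.
apply: (le_trans (ler_normB _ _)).
have h1 := zproj c hi; have h2 := zproj c (ltnW hi); nra.
Qed.

End Blocks.

Section Kernels.
Variables (R : realType) (W : normedModType R).

Lemma approx_closed (A : set W) x : closed A ->
  (forall eps : R, 0 < eps -> exists y, A y /\ `|x - y| < eps) -> A x.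
Proof.
move=> hA H; rewrite (closure_id A).1 //.
move=> B /nbhs_ballP [r r0 hB]; have [y [Ay hy]] := H r r0.
by exists y; split => //; apply: hB; rewrite -ball_normE.
Qed.

Lemma lin_sub_ker (Y : set W) (phi : W -> R) :
  (forall x y, phi (x + y) = phi x + phi y) -> (forall c x, phi (c *: x) = c * phi x) ->
  lin_subspace Y -> lin_subspace (Y `&` [set x | phi x = 0]).
Proof.
move=> hD hZ [Y0 [YD YZ]]; split; last split.
- split; first exact: Y0.
  by rewrite /= -(scale0r (0 : W)) hZ mul0r.
- by move=> x y [Yx px] [Yy py]; split; [exact: YD | rewrite /= hD px py addr0].
- by move=> c x [Yx px]; split; [exact: YZ | rewrite /= hZ px mulr0].
Qed.

Lemma closed_ker (Y : set W) (phi : W -> R) (L : R) :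
  (forall x y, phi (x + y) = phi x + phi y) -> (forall c x, phi (c *: x) = c * phi x) ->
  0 <= L -> (forall x, `|phi x| <= L * `|x|) ->
  closed Y -> closed (Y `&` [set x | phi x = 0]).
Proof.
move=> hD hZ hL0 hL hY; apply: closedP => x H; split.
  by apply: (approx_closed hY) => eps e0; have [y [[Yy _] h]] := H eps e0; exists y.
have hN : forall x, phi (- x) = - phi x.
  by move=> u; rewrite -scaleN1r hZ mulN1r.
apply/eqP; rewrite -normr_le0; apply/ler_addgt0Pr => eps e0; rewrite add0r.
have hL1 : 0 < L + 1 by rewrite ltr_wpDl.
have [y [[Yy py] hy]] := H _ (divr_gt0 e0 hL1).
have -> : phi x = phi (x - y) by rewrite hD hN /= py subr0.
apply: (le_trans (hL _)).
have h1 : L * `|x - y| <= L * (eps / (L + 1)) by rewrite ler_wpM2l // ltW.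
apply: (le_trans h1).
rewrite mulrA ler_pdivrMr //; nra.
Qed.

Lemma infdim_ker (Y : set W) (phi : W -> R) :
  (forall x y, phi (x + y) = phi x + phi y) -> (forall c x, phi (c *: x) = c * phi x) ->
  lin_subspace Y -> infinite_dim Y -> infinite_dim (Y `&` [set x | phi x = 0]).
Proof.
move=> hD hZ [Y0 [YD YZ]] hinf n.
have hN : forall x, phi (- x) = - phi x.
  by move=> u; rewrite -scaleN1r hZ mulN1r.
have [f [Yf indf]] := hinf n.+1.
have [k0 hk0] : exists k0 : 'I_n.+1, phi (f k0) = 0 -> forall k, phi (f k) = 0.
  case: (pselect (exists k, phi (f k) <> 0)) => [[k hk]|hno].
  - by exists k.
  - exists ord0 => _ k; apply: contrapT => hk; apply: hno; by exists k.
pose t (i : 'I_n) := phi (f (lift k0 i)) / phi (f k0).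
pose g (i : 'I_n) := f (lift k0 i) - t i *: f k0.
exists g; split.
- move=> i; split.
  + by apply: (YD); [exact: Yf | rewrite -scaleN1r; apply: (YZ); apply: (YZ)].
  + rewrite /= /g hD hN hZ /t.
    have [h0|hn0] := eqVneq (phi (f k0)) 0.
      by rewrite h0 mulr0 oppr0 addr0 (hk0 h0).
    by rewrite divfK // subrr.
- move=> c hc.
  pose c' (k : 'I_n.+1) := if unlift k0 k is Some i then c i else - \sum_(i < n) c i * t i.
  have hc' : \sum_(k < n.+1) c' k *: f k = 0.
    rewrite (bigD1_ord k0) //= /c' unlift_none.
    under eq_bigr => i _ do rewrite liftK.
    have : \sum_(i < n) c i *: g i =
        \sum_(i < n) c i *: f (lift k0 i) - (\sum_(i < n) c i * t i) *: f k0.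
      rewrite scaler_suml -sumrB; apply: eq_bigr => i _; rewrite /g scalerBr scalerA.
      by [].
    rewrite hc => /eqP; rewrite eq_sym subr_eq0 => /eqP ->.
    by rewrite scaleNr addNr.
  move=> i; have := indf c' hc' (lift k0 i).
  by rewrite /c' liftK.
Qed.
End Kernels.

Section Tail.
Variables (R : realType) (W : completeNormedModType R) (e : nat -> W).
Hypothesis hS : schauder_basis e.
Local Notation P := (P hS).
Local Notation coef := (coef hS).
Variable C : R.
Hypothesis C1 : 1 <= C.
Hypothesis hC : forall N x, `|P N x| <= C * `|x|.

Definition Yk (Y : set W) N := Y `&` [set x | forall i, (i < N)%N -> coef x i = 0].

Lemma Yk_P Y N y : Yk Y N y -> P N y = 0.
Proof.
move=> [_ h]; rewrite /P /Sm big1 // => i _; by rewrite h ?scale0r.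
Qed.

Lemma Yk_sub Y N : Yk Y N `<=` Y.
Proof. by move=> y []. Qed.

Lemma Yk_ok Y N : inf_dim_closed_subspace Y -> inf_dim_closed_subspace (Yk Y N).
Proof.
move=> hY; elim: N => [|N IH].
  have -> : Yk Y 0 = Y by apply/seteqP; split => [y []|y Yy] //; split.
  exact: hY.
have -> : Yk Y N.+1 = Yk Y N `&` [set x | coef x N = 0].
  apply/seteqP; split.
  - move=> y [Yy h]; split; [split => // i hi|]; apply: h => //; exact: ltnW.
  - move=> y [[Yy h] hN]; split => // i; rewrite ltnS leq_eqVlt => /orP [/eqP ->|] //.
    exact: h.
have hD : forall x y, coef (x + y) N = coef x N + coef y N by move=> x y; rewrite coefD.
have hZ : forall c x, coef (c *: x) N = c * coef x N by move=> c x; rewrite coefZ.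
have en : 0 < `|e N| by rewrite normr_gt0 (e_neq0 hS).
have C0 : 0 <= C by apply: le_trans C1.
case: IH => [hl [hc hi]]; split; last split.
- exact: lin_sub_ker.
- apply: (closed_ker (L := 2 * C / `|e N|)) => //.
    by rewrite divr_ge0 // mulr_ge0.
  move=> x; rewrite mulrAC ler_pdivlMr //; exact: coef_bound.
- exact: infdim_ker.
Qed.
End Tail.

Lemma fin_max (Q : nat -> nat -> Prop) (l : nat) :
  (forall i, (i < l)%N -> exists Ni, forall N, (Ni <= N)%N -> Q i N) ->
  exists N0, forall i, (i < l)%N -> forall N, (N0 <= N)%N -> Q i N.
Proof.
elim: l => [|l IH] H; first by exists 0%N.
have [N1 H1] := IH (fun i hi => H i (ltnW hi)).
have [N2 H2] := H l (ltnSn l).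
exists (maxn N1 N2) => i; rewrite ltnS leq_eqVlt => /orP [/eqP ->|hi] N hN.
- by apply: H2; exact: leq_trans (leq_maxr _ _) hN.
- by apply: H1 => //; exact: leq_trans (leq_maxl _ _) hN.
Qed.

Section Emb.
Variables (R : realType) (V : normedModType R).

Lemma emb_prefix (y : nat -> V) (Y : set V) K s u :
  emb_tree y Y K (s ++ u) -> emb_tree y Y K s.
Proof.
move=> [hm he]; split.
  move=> i hi; have := hm i; rewrite size_cat nth_cat hi; apply.
  exact: leq_trans hi (leq_addr _ _).
move=> c; pose c' i := if (i < size s)%N then c i else 0.
have hsum : forall (t : nat -> V),
    \sum_(i < size (s ++ u)) c' i *: t i = \sum_(i < size s) c i *: t i.
  move=> t; rewrite size_cat big_split_ord /= [X in _ + X]big1 ?addr0.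
    by apply: eq_bigr => i _; rewrite /c' /= ltn_ord.
  by move=> i _; rewrite /c' /= ltnNge leq_addr scale0r.
have := he c'; rewrite (hsum y) (hsum (nth 0 (s ++ u))).
have -> : \sum_(i < size s) c i *: (s ++ u)`_i = \sum_(i < size s) c i *: s`_i.
  by apply: eq_bigr => i _; rewrite nth_cat ltn_ord.
by [].
Qed.

Lemma emb_mono (y : nat -> V) (Y : set V) K1 K2 s :
  1 <= K1 -> K1 <= K2 -> emb_tree y Y K1 s -> emb_tree y Y K2 s.
Proof.
move=> h1 h12 [hm he]; split => // c; have [a b] := he c.
have K10 : 0 < K1 by apply: lt_le_trans h1.
have K20 : 0 < K2 by apply: lt_le_trans h12.
split.
- apply: le_trans a; rewrite ler_wpM2r // lef_pV2 //.
- apply: (le_trans b); rewrite ler_wpM2r //.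
Qed.
End Emb.

Lemma arith_low (R : realType) (K C Klm x y z1 z2 zz t : R) :
  1 <= K -> 1 <= C -> 1 <= Klm -> 0 <= zz -> t <= x + y -> x <= K * z1 ->
  z1 <= C * zz -> z2 <= (1 + C) * zz -> y <= z2 ->
  t <= (K * (3 * C) + (1 + C) + Klm * (1 + 2 * C)) * zz.
Proof.
move=> hK hC hL hz ht hx hz1 hz2 hy.
have p1 : K * z1 <= K * (C * zz) by rewrite ler_wpM2l //; lra.
have m1 : 0 <= K * (C * zz) by rewrite !mulr_ge0 //; lra.
have m2 : 0 <= Klm * (C * zz) by rewrite !mulr_ge0 //; lra.
have m3 : 0 <= Klm * zz by rewrite !mulr_ge0 //; lra.
have m4 : 0 <= C * zz by rewrite !mulr_ge0 //; lra.
have e : (K * (3 * C) + (1 + C) + Klm * (1 + 2 * C)) * zz =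
   3 * (K * (C * zz)) + zz + C * zz + Klm * zz + 2 * (Klm * (C * zz)) by ring.
rewrite e.
have e2 : (1 + C) * zz = zz + C * zz by ring.
rewrite e2 in hz2.
lra.
Qed.

Lemma arith_up (R : realType) (K C Klm x y z1 z2 zz t : R) :
  1 <= K -> 1 <= C -> 1 <= Klm -> 0 <= t -> zz <= z1 + z2 -> z1 <= K * x ->
  z2 <= Klm * y -> y <= t + x -> x <= 2 * C * t ->
  zz <= (K * (3 * C) + (1 + C) + Klm * (1 + 2 * C)) * t.
Proof.
move=> hK hC hL ht hzz hz1 hz2 hy hx.
have p1 : K * x <= K * (2 * C * t) by rewrite ler_wpM2l //; lra.
have p2 : Klm * y <= Klm * (t + 2 * C * t) by rewrite ler_wpM2l //; lra.
have m1 : 0 <= K * (C * t) by rewrite !mulr_ge0 //; lra.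
have m2 : 0 <= Klm * (C * t) by rewrite !mulr_ge0 //; lra.
have m3 : 0 <= Klm * t by rewrite !mulr_ge0 //; lra.
have m4 : 0 <= C * t by rewrite !mulr_ge0 //; lra.
have e : (K * (3 * C) + (1 + C) + Klm * (1 + 2 * C)) * t =
   3 * (K * (C * t)) + t + C * t + Klm * t + 2 * (Klm * (C * t)) by ring.
have e1 : K * (2 * C * t) = 2 * (K * (C * t)) by ring.
have e2 : Klm * (t + 2 * C * t) = Klm * t + 2 * (Klm * (C * t)) by ring.
rewrite e; rewrite e1 in p1; rewrite e2 in p2.
lra.
Qed.

Section Glue.
Variables (R : realType) (W : completeNormedModType R) (e : nat -> W).
Hypothesis hS : schauder_basis e.
Local Notation P := (P hS).
Local Notation coef := (coef hS).
Variable C : R.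
Hypothesis C1 : 1 <= C.
Hypothesis hC : forall N x, `|P N x| <= C * `|x|.
Variables (z : nat -> W) (p : nat -> nat) (a : nat -> R).
Hypothesis hp : forall n, (p n < p n.+1)%N.
Hypothesis hz : forall n, z n = \sum_(p n <= i < p n.+1) a i *: e i.
Hypothesis hz0 : forall n, z n != 0.
Variable Y : set W.
Hypothesis hY : inf_dim_closed_subspace Y.
Variable Klm : R.
Hypothesis Klm1 : 1 <= Klm.
Hypothesis hLM : forall F Y' : set W, finite_dim_subspace F -> inf_dim_closed_subspace Y' ->
  K_embeds Klm F Y'.

Local Ltac genCK := move: C1 Klm1; move: (C) (Klm) => C' Klm' hC1' hK1'.

Definition G (K : R) := K * (3 * C) + (1 + C) + Klm * (1 + 2 * C).

Lemma G_ge K : 1 <= K -> K <= G K.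
Proof.
move=> h; rewrite /G; genCK.
have hKC : K <= K * (3 * C') by apply: ler_peMr; lra.
have hl : 0 <= Klm' * (1 + 2 * C') by rewrite mulr_ge0 //; lra.
lra.
Qed.
Lemma G_ge1 K : 1 <= K -> 1 <= G K.
Proof. move=> h; apply: le_trans h (G_ge h). Qed.
Lemma G_mono K1 K2 : K1 <= K2 -> G K1 <= G K2.
Proof.
move=> h; rewrite /G; genCK.
have : K1 * (3 * C') <= K2 * (3 * C') by rewrite ler_wpM2r //; lra.
lra.
Qed.

Lemma span_ok (n : nat) (f : 'I_n -> W) (T : W -> W) :
  let F := [set x | exists d : 'I_n -> R, x = \sum_(i < n) d i *: f i] in
  (forall x y, F x -> F y -> T (x + y) = T x + T y) ->
  (forall (c : R) x, F x -> T (c *: x) = c *: T x) ->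
  forall d : 'I_n -> R, T (\sum_(i < n) d i *: f i) = \sum_(i < n) d i *: T (f i).
Proof.
move=> F hD hZ d.
have F0 : F 0 by exists (fun _ => 0); rewrite big1 // => i _; rewrite scale0r.
have FD : forall x y, F x -> F y -> F (x + y).
  move=> x y [d1 ->] [d2 ->]; exists (fun i => d1 i + d2 i).
  by rewrite -big_split; apply: eq_bigr => i _; rewrite scalerDl.
have FZ : forall c x, F x -> F (c *: x).
  move=> c x [d1 ->]; exists (fun i => c * d1 i).
  by rewrite scaler_sumr; apply: eq_bigr => i _; rewrite scalerA.
have Ff : forall i, F (f i).
  move=> i; exists (fun j => if j == i then 1 else 0).
  rewrite (bigD1 i) //= eqxx scale1r big1 ?addr0 // => j /negbTE ->.
  by rewrite scale0r.
have T0 : T 0 = 0 by have := hZ 0 0 F0; rewrite !scale0r.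
suff [] : F (\sum_(i < n) d i *: f i) /\ T (\sum_(i < n) d i *: f i) = \sum_(i < n) d i *: T (f i) by [].
apply: (big_ind2 (fun x y => F x /\ T x = y)).
- by split.
- by move=> x1 x2 y1 y2 [F1 <-] [F2 <-]; split; [exact: FD | exact: hD].
- by move=> i _; split; [exact: FZ | exact: hZ].
Qed.

Lemma glue K' s : 1 <= K' -> emb_tree z Y K' s ->
  forall n, exists w, size w = n /\ emb_tree z Y (G K') (s ++ w).
Proof.
move=> K1 [hsY hse] n.
set l := size s.
have C0 : 0 < C by apply: lt_le_trans C1.
have K0 : 0 < K' by apply: lt_le_trans K1.
have D0 : 0 < 4 * C * K' * (l.+1)%:R by rewrite !mulr_gt0.
pose del i := `|z i| / (4 * C * K' * (l.+1)%:R).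
have del0 : forall i, 0 < del i by move=> i; rewrite divr_gt0 // normr_gt0.
have [N hN] : exists N, forall i, (i < l)%N -> `|s`_i - P N s`_i| <= del i.
  have [N0 H0] := fin_max (Q := fun i N => `|s`_i - P N s`_i| <= del i) (l := l)
    (fun i _ => PP hS s`_i (del0 i)).
  by exists N0 => i hi; apply: H0.
pose Y' := Yk hS Y N.
have hY' : inf_dim_closed_subspace Y' := Yk_ok C1 hC N hY.
pose f (i : 'I_n) := z (l + i)%N.
pose F := [set x | exists d : 'I_n -> R, x = \sum_(i < n) d i *: f i].
have hF : finite_dim_subspace F by exists n, f.
have [T [a0 [b0 [TD [TZ [TY [a00 [b00 [hab [Ta Tb]]]]]]]]]] := hLM hF hY'.
have Tsum := span_ok TD TZ.
have Ff : forall d, F (\sum_(i < n) d i *: f i) by move=> d; exists d.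
have Fz : forall k, (k < n)%N -> F (z (l + k)%N).
  move=> k hk; exists (fun j => if j == Ordinal hk then 1 else 0).
  rewrite (bigD1 (Ordinal hk)) //= eqxx scale1r big1 ?addr0 // => j /negbTE ->.
  by rewrite scale0r.
have [[Y'0 [Y'D Y'Z]] _] := hY'.
have [[Y0 [YD YZ]] _] := hY.
pose w := mkseq (fun i => a0^-1 *: T (z (l + i)%N)) n.
exists w; split; first by rewrite size_mkseq.
split.
  move=> i; rewrite size_cat size_mkseq nth_cat -/l => hi.
  case: ifP => hil; first exact: hsY.
  have hk : (i - l < n)%N by rewrite ltn_subLR // leqNgt hil.
  rewrite nth_mkseq //; apply: (YZ); apply: (Yk_sub (hS := hS) (N := N)).
  by apply: TY; apply: Fz.
move=> c.
pose X := \sum_(i < l) c i *: s`_i.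
pose Z2 := \sum_(i < n) c (l + i)%N *: f i.
pose Yw := a0^-1 *: T Z2.
pose Z1 := zsum z c l.
have hsw : size (s ++ w) = (l + n)%N by rewrite size_cat size_mkseq.
have E1 : \sum_(i < size (s ++ w)) c i *: (s ++ w)`_i = X + Yw.
  rewrite hsw big_split_ord /=; congr (_ + _).
    by apply: eq_bigr => i _; rewrite nth_cat ltn_ord.
  rewrite /Yw Tsum scaler_sumr; apply: eq_bigr => i _.
  rewrite nth_cat ltnNge leq_addr /= addKn nth_mkseq //.
  by rewrite scalerA mulrC -scalerA.
have E2 : \sum_(i < size (s ++ w)) c i *: z i = Z1 + Z2.
  by rewrite hsw big_split_ord.
have hZ : Z1 + Z2 = zsum z c (l + n)%N by rewrite /zsum big_split_ord.
rewrite E1 E2.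
have [hX1 hX2] := hse c.
rewrite -/X -/l -/(zsum z c l) -/Z1 in hX1 hX2.
have hX1' : `|X| <= K' * `|Z1|.
  by rewrite -ler_pdivrMl.
have hZ1 : `|Z1| <= C * `|Z1 + Z2|.
  by rewrite hZ; exact: (zproj hC hp hz c (leq_addr _ _)).
have hZ2 : `|Z2| <= (1 + C) * `|Z1 + Z2|.
  have e2 : Z2 = (Z1 + Z2) - Z1 by rewrite addrAC subrr add0r.
  rewrite {1}e2; apply: (le_trans (ler_normB _ _)).
  by rewrite mulrDl mul1r lerD.
have FZ2 : F Z2 := Ff _.
have hYw1 : `|Yw| <= `|Z2|.
  rewrite /Yw normrZ gtr0_norm ?invr_gt0 // ler_pdivrMl //; exact: Ta.
have hYw2 : `|Z2| <= Klm * `|Yw|.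
  apply: (le_trans (Tb _ FZ2)).
  have -> : T Z2 = a0 *: Yw by rewrite /Yw scalerA mulfV ?gt_eqF // scale1r.
  rewrite normrZ gtr0_norm // mulrA; apply: ler_wpM2r => //.
  by rewrite mulrC.
have Y'Yw : Y' Yw by apply: (Y'Z); apply: TY.
have hPYw : P N Yw = 0 := Yk_P Y'Yw.
(* almost orthogonality *)
have hXP : `|X - P N X| <= `|X| / 2.
  have -> : X - P N X = \sum_(i < l) c i *: (s`_i - P N s`_i).
    rewrite /X (P_sum hS N l (fun i => c i *: s`_i)) -sumrB.
    by apply: eq_bigr => i _; rewrite PZ scalerBr.
  apply: (le_trans (ler_norm_sum _ _ _)).
  apply: (@le_trans _ _ (\sum_(i < l) `|X| / (2 * (l.+1)%:R))).
    apply: ler_sum => i _; rewrite normrZ.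
    apply: (le_trans (ler_wpM2l (normr_ge0 _) (hN i (ltn_ord i)))).
    rewrite /del mulrA ler_pdivrMr //.
    have hc := zcoef hC hp hz c (ltn_ord i).
    rewrite -/l -/Z1 in hc.
    apply: (le_trans hc).
    have -> : `|X| / (2 * (l.+1)%:R) * (4 * C * K' * (l.+1)%:R) = 2 * C * (K' * `|X|).
      by field; rewrite addrC natr1 pnatr_eq0.
    apply: ler_wpM2l; first by rewrite mulr_ge0 // ltW.
    exact: hX2.
  rewrite sumr_const card_ord -[_ *+ l]mulr_natr -[l.+1%:R]natr1.
  have L0 : 0 <= l%:R :> R by exact: ler0n.
  have q0 : 0 <= `|X| by exact: normr_ge0.
  move: L0 q0; move: (l%:R : R) (`|X|) => L q L0 q0.
  rewrite (_ : q / (2 * (L + 1)) * L = (q * L) / (2 * (L + 1))); last first.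
    by field; lra.
  rewrite ler_pdivrMr; last by lra.
  nra.
have hPX : P N X = P N (X + Yw) by rewrite PD hPYw addr0.
have hXt : `|X| <= `|P N X| + `|X - P N X|.
  by rewrite -{1}(subrK (P N X) X) addrC; apply: ler_normD.
have hPXC : `|P N X| <= C * `|X + Yw| by rewrite hPX.
have hYt : `|Yw| <= `|X + Yw| + `|X|.
  have e3 : Yw = (X + Yw) - X by rewrite addrC addKr.
  by rewrite {1}e3; apply: ler_normB.
have hXY : `|X + Yw| <= `|X| + `|Yw| by apply: ler_normD.
have hZZ : `|Z1 + Z2| <= `|Z1| + `|Z2| by apply: ler_normD.
have GK0 : 0 < G K' by apply: lt_le_trans (G_ge1 K1).
have hXo : `|X| <= 2 * C * `|X + Yw|.
  move: hXt hPXC hXP; move: (C) (`|X|) (`|P N X|) (`|X - P N X|) => C' x px d.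
  move=> h1 h2 h3; lra.
split.
- rewrite ler_pdivrMl //.
  apply: (arith_low K1 C1 Klm1 (normr_ge0 _) hXY hX1' hZ1 hZ2 hYw1).
- apply: (arith_up K1 C1 Klm1 (normr_ge0 _) hZZ hX2 hYw2 hYt hXo).
Qed.
End Glue.

Section Rank.
Variables (R : realType) (W : completeNormedModType R) (e : nat -> W).
Hypothesis hS : schauder_basis e.
Variable C : R.
Hypothesis C1 : 1 <= C.
Hypothesis hC : forall N x, `|P hS N x| <= C * `|x|.
Variables (z : nat -> W) (p : nat -> nat) (a : nat -> R).
Hypothesis hp : forall n, (p n < p n.+1)%N.
Hypothesis hz : forall n, z n = \sum_(p n <= i < p n.+1) a i *: e i.
Hypothesis hz0 : forall n, z n != 0.
Variable Y : set W.
Hypothesis hY : inf_dim_closed_subspace Y.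
Variable Klm : R.
Hypothesis Klm1 : 1 <= Klm.
Hypothesis hLM : forall F Y' : set W, finite_dim_subspace F -> inf_dim_closed_subspace Y' ->
  K_embeds Klm F Y'.

Local Notation G := (G C Klm).
Definition KK k := iter k G (G 1).

Lemma KK_ge1 k : 1 <= KK k.
Proof.
elim: k => [|k IH]; first exact: (G_ge1 C1 Klm1 (lexx 1)).
by rewrite /KK iterS; apply: (G_ge1 C1 Klm1).
Qed.

Lemma KK_mono k1 k2 : (k1 <= k2)%N -> KK k1 <= KK k2.
Proof.
move=> /subnKC <-; elim: (k2 - k1)%N => [|k IH]; first by rewrite addn0.
apply: (le_trans IH); rewrite addnS /KK iterS; apply: (G_ge C1 Klm1); exact: KK_ge1.
Qed.

Lemma S_m M : forall m, (m <= M)%N -> forall n s u K', 1 <= K' -> K' <= KK (M - m) ->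
  emb_tree z Y K' (s ++ u) -> (n <= size u)%N ->
  rho_ge (emb_tree z Y (KK M)) s (m, n).
Proof.
elim/ltn_ind => m IHm hm.
elim/ltn_ind => n IHn s u K' K1 KKm hsu hn.
apply: RhoGe.
  apply: (emb_mono K1 _ (emb_prefix hsu)).
  apply: (le_trans KKm); apply: KK_mono; exact: leq_subr.
move=> [b1 b2] [/= hb|/= [hb1 hb2]].
-
  have hs := emb_prefix hsu.
  have [w [hw hsw]] := glue C1 hC hp hz hz0 hY Klm1 hLM K1 hs b2.+1.
  case: w hw hsw => [//|x w'] [hw'] hsw.
  exists x, [::].
  apply: (IHm b1 hb (leq_trans (ltnW hb) hm) b2 (s ++ [:: x]) w' (G K')).
  + exact: (G_ge1 C1 Klm1 K1).
  + apply: (le_trans (G_mono C1 Klm1 KKm)).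
    have -> : G (KK (M - m)) = KK (M - m).+1 by [].
    apply: KK_mono; lia.
  + by rewrite -catA.
  + by rewrite hw'.
- subst b1.
  case: u hsu hn => [|x u'] hsu hn; first by move: hn; rewrite leqn0 => /eqP hn0; rewrite hn0 in hb2.
  exists x, [::].
  apply: (IHn b2 hb2 (s ++ [:: x]) u' K' K1 KKm).
  + by rewrite -catA.
  + by move: hn => /= hn; rewrite -ltnS (leq_trans hb2 hn).
Qed.
End Rank.


Unset Implicit Arguments.
Theorem proposition1p4 (R : realType) (W : completeNormedModType R) (e : nat -> W) :
  schauder_basis e -> locally_minimal W -> omega2_minimal e.
Proof.
move=> hS [Klm [Klm1 hLM]] z [p [a [hp [hz hz0]]]] Y hY [m n].
have [C [C1 hC]] := basis_const hS.
have h0 : emb_tree z Y 1 [::].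
  split => // c; rewrite !big_ord0 normr0 mulr0 mulr0; split => //.
have [w [hw hsw]] := glue C1 hC hp hz hz0 hY Klm1 hLM (lexx 1) h0 n.
exists (KK C Klm m); split; first exact: KK_ge1.
exists [::].
apply: (S_m C1 hC hp hz hz0 hY Klm1 hLM (leqnn m) (u := w) (K' := G C Klm 1)).
- exact: (G_ge1 C1 Klm1 (lexx 1)).
- by rewrite subnn.
- exact: hsw.
- by rewrite hw.
Qed.
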